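(* Let $q$ be a prime power, $n\ge 4$, and let $\mathcal{L}$ be a Cameron-Liebler line class of $\mathrm{AG}(n,q)$ with parameter $x=2$. Then for every two points $p_1,p_2$ of $\pi_\infty$, there are exactly two lines of $\mathcal{L}$ through $p_1$ and exactly two through $p_2$ (a line passing through a point of $\pi_\infty$ meaning its projective closure contains it), and these four lines span a projective subspace of $\mathrm{PG}(n,q)$ of dimension at most $3$.
   Context: $\mathrm{AG}(n,q)$ is $\mathrm{PG}(n,q)$ with a hyperplane $\pi_\infty$ removed; affine points are points outside $\pi_\infty$, affine lines are projective lines not contained in $\pi_\infty$. With $A_n$ the incidence matrix of affine points versus affine lines, a set $\mathcal{L}$ of affine lines is a Cameron-Liebler line class of $\mathrm{AG}(n,q)$ if its characteristic vector lies in the real row space $\mathrm{Im}(A_n^T)$; its parameter is $|\mathcal{L}|(q-1)/(q^n-1)$. *)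

(* Defs.v *)
From HB Require Import structures.
From mathcomp Require Import all_boot all_order all_algebra all_field.
From mathcomp Require Import reals.
Set Implicit Arguments. Unset Strict Implicit. Unset Printing Implicit Defensive.
Import Order.TTheory GRing.Theory Num.Theory.
Local Open Scope ring_scope.

(* AG(n,q) over a finite field F with q = #|F|: affine points are 'rV[F]_n.
   A point of pi_infty is a 1-dimensional subspace of F^n, represented by a
   nonzero direction vector d. *)

Definition line_dir (F : finFieldType) (n : nat) (a d : 'rV[F]_n)
  : {set 'rV[F]_n} := [set a + t *: d | t : F].

Definition is_aline (F : finFieldType) (n : nat) (L : {set 'rV[F]_n}) : bool :=
  [exists a, exists d, (d != 0) && (L == line_dir a d)].

(* the projective closure of the affine line L contains the point at
   infinity represented by d (d nonzero) *)
Definition through_inf (F : finFieldType) (n : nat) (L : {set 'rV[F]_n})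
  (d : 'rV[F]_n) : bool :=
  [exists a, L == line_dir a d].

(* Cameron-Liebler line class of AG(n,q): a set of affine lines whose
   characteristic vector chi (indexed by affine lines) lies in the real row
   space Im(A_n^T), i.e. chi = A_n^T w for some real vector w indexed by
   affine points: chi(L) = sum_{P in L} w(P) for every affine line L. *)
Definition CL_class (R : realType) (F : finFieldType) (n : nat)
  (Lc : {set {set 'rV[F]_n}}) : Prop :=
  (forall L, L \in Lc -> is_aline L) /\
  exists w : 'rV[F]_n -> R,
    forall L, is_aline L -> ((L \in Lc)%:R = \sum_(P in L) w P).

Definition CL_param (R : realType) (F : finFieldType) (n : nat)
  (Lc : {set {set 'rV[F]_n}}) : R :=
  (#|Lc|%:R * (#|F|%:R - 1)) / (#|F|%:R ^+ n - 1).

(* homogeneous coordinates in F^(n+1) of an affine point of PG(n,q) *)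
Definition hom (F : finFieldType) (n : nat) (P : 'rV[F]_n) : 'rV[F]_(n + 1) :=
  row_mx P (1 : 'M[F]_1).

(* vector subspace of F^(n+1) spanned by (the projective closures of) a set
   of affine lines; projective dimension of the span = \rank - 1 *)
Definition span_lines (F : finFieldType) (n : nat) (S : {set {set 'rV[F]_n}})
  : 'M[F]_(n + 1) :=
  (\sum_(L in S) \sum_(P in L) <<hom P>>)%MS.

(* Main.v *)
Require Import Defs.
From HB Require Import structures.
From mathcomp Require Import all_boot all_order all_algebra all_field.
From mathcomp Require Import reals.
Import Order.TTheory GRing.Theory Num.Theory.
Local Open Scope ring_scope.

Lemma mem_line {F : finFieldType} {n : nat} (a d : 'rV[F]_n) : a \in line_dir a d.
Proof. by apply/imsetP; exists 0 => //; rewrite scale0r addr0. Qed.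

Lemma mem_line1 {F : finFieldType} {n : nat} (a d : 'rV[F]_n) : a + d \in line_dir a d.
Proof. by apply/imsetP; exists 1 => //; rewrite scale1r. Qed.

Lemma line_dir_shift {F : finFieldType} {n : nat} (a d : 'rV[F]_n) s :
  line_dir (a + s *: d) d = line_dir a d.
Proof.
apply/setP => x; apply/imsetP/imsetP => [[t _ ->]|[t _ ->]].
- by exists (s + t) => //; rewrite scalerDl addrA.
- exists (t - s) => //; rewrite scalerBl -addrA; congr (_ + _).
  by rewrite addrC -addrA addNr addr0.
Qed.

Lemma line_dir_mem {F : finFieldType} {n : nat} (a d x : 'rV[F]_n) :
  x \in line_dir a d -> line_dir x d = line_dir a d.
Proof. by case/imsetP => t _ ->; rewrite line_dir_shift. Qed.

Lemma dir_unique {F : finFieldType} {n : nat} (a b d e : 'rV[F]_n) :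
  line_dir a d = line_dir b e -> exists c, d = c *: e.
Proof.
move=> E.
have := mem_line a d; rewrite E => /imsetP[s _ Hs].
have := mem_line1 a d; rewrite E => /imsetP[t _ Ht].
exists (t - s).
have -> : d = (a + d) - a by rewrite addrC addKr.
by rewrite Ht Hs scalerBl opprD addrACA subrr add0r.
Qed.

Lemma scale_dir {F : finFieldType} {n : nat} (a d : 'rV[F]_n) c :
  c != 0 -> line_dir a (c *: d) = line_dir a d.
Proof.
move=> c0; apply/setP => x; apply/imsetP/imsetP => [[t _ ->]|[t _ ->]].
- by exists (t * c) => //; rewrite scalerA.
- by exists (t / c) => //; rewrite scalerA mulfVK.
Qed.

Lemma aline_ne0 {F : finFieldType} {n : nat} (L : {set 'rV[F]_n}) :
  is_aline L -> ~~ through_inf L 0.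
Proof.
case/existsP => a /existsP[e /andP[e0 /eqP ->]].
apply/negP => /existsP[b /eqP /dir_unique [c]]; rewrite scaler0.
by move/eqP; rewrite (negbTE e0).
Qed.

Lemma card_dirs {F : finFieldType} {n : nat} (a e : 'rV[F]_n) : e != 0 ->
  #|[set d | through_inf (line_dir a e) d]| = #|F|.-1.
Proof.
move=> e0.
have -> : [set d | through_inf (line_dir a e) d] = [set c *: e | c in [set~ 0]].
  apply/setP => d; rewrite inE; apply/idP/imsetP.
  - case/existsP => b /eqP /dir_unique [c Hc].
    have c0 : c != 0 by apply: contraNneq e0 => c0; rewrite Hc c0 scale0r.
    exists c^-1; first by rewrite !inE invr_eq0.
    by rewrite Hc scalerA mulVf // scale1r.
  - case=> c; rewrite !inE => c0 ->; apply/existsP; exists a.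
    by rewrite scale_dir.
rewrite card_imset ?cardsC1 // => c c' /eqP; rewrite -subr_eq0 -scalerBl.
by rewrite scaler_eq0 (negbTE e0) orbF subr_eq0 => /eqP.
Qed.

Lemma sum_dir {R : realType} {F : finFieldType} {n : nat}
  {Lc : {set {set 'rV[F]_n}}} {w : 'rV[F]_n -> R}
  (hw : forall L, is_aline L -> (L \in Lc)%:R = \sum_(P in L) w P)
  (d : 'rV[F]_n) (S : {set 'rV[F]_n}) :
  d != 0 -> (forall P t, P \in S -> P + t *: d \in S) ->
  \sum_(P in S) w P = #|[set L in Lc | through_inf L d & L \subset S]|%:R.
Proof.
move=> d0 hS.
pose Pd := [set line_dir a d | a in S].
have covS : cover Pd = S.
  apply/setP=> x; apply/bigcupP/idP.
  - by case=> L /imsetP[a aS ->] /imsetP[t _ ->]; exact: hS.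
  - by move=> xS; exists (line_dir x d); [exact: imset_f | exact: mem_line].
have tI : trivIset Pd.
  apply/trivIsetP => A B /imsetP[a aS ->] /imsetP[b bS ->] neq.
  rewrite -setI_eq0; apply/eqP/setP => x; rewrite in_set0 inE.
  apply/negbTE/andP => -[xa xb]; move/negP: neq; apply.
  by rewrite -(line_dir_mem _ _ _ xa) -(line_dir_mem _ _ _ xb).
have memPd : forall L, (L \in Pd) = through_inf L d && (L \subset S).
  move=> L; apply/imsetP/andP.
  - case=> a aS ->; split; first by apply/existsP; exists a.
    by apply/subsetP => x /imsetP[t _ ->]; exact: hS.
  - case=> /existsP[a /eqP ->] sub; exists a => //.
    exact: (subsetP sub _ (mem_line a d)).
rewrite -{1}covS (big_trivIset _ tI) /=.
transitivity (\sum_(L in Pd) ((L \in Lc)%:R : R)).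
  apply: eq_bigr => L /imsetP[a _ ->]; rewrite hw //.
  by apply/existsP; exists a; apply/existsP; exists d; rewrite d0 eqxx.
rewrite -sumr_const big_mkcond [RHS]big_mkcond /=.
apply: eq_bigr => L _; rewrite !inE memPd.
by case: (L \in Lc); case: (_ && _).
Qed.

Lemma col_subl {F : fieldType} {m1 m2 k} (A : 'M[F]_(m1, k)) (B : 'M_(m2, k)) :
  (A <= col_mx A B)%MS.
Proof. by rewrite -addsmxE addsmxSl. Qed.
Lemma col_subr {F : fieldType} {m1 m2 k} (A : 'M[F]_(m1, k)) (B : 'M_(m2, k)) :
  (B <= col_mx A B)%MS.
Proof. by rewrite -addsmxE addsmxSr. Qed.

Lemma hom_sub {F : finFieldType} {n : nat} m (M : 'M[F]_(m, n + 1))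
  (a d1 d2 : 'rV[F]_n) (s t : F) :
  (row_mx d1 0 <= M)%MS -> (row_mx d2 0 <= M)%MS -> (Defs.hom a <= M)%MS ->
  (Defs.hom (a + s *: d1 + t *: d2) <= M)%MS.
Proof.
move=> h1 h2 ha.
have -> : Defs.hom (a + s *: d1 + t *: d2) = Defs.hom a + s *: row_mx d1 0 + t *: row_mx d2 0.
  by rewrite /Defs.hom !scale_row_mx !add_row_mx !scaler0 !addr0.
by rewrite !addmx_sub // scalemx_sub.
Qed.

Theorem lemma6p6 (R : realType) (F : finFieldType) (n : nat)
  (Lc : {set {set 'rV[F]_n}}) :
  (4 <= n)%N -> CL_class R Lc -> CL_param R Lc = 2 ->
  forall d1 d2 : 'rV[F]_n, d1 != 0 -> d2 != 0 ->
  \rank (col_mx d1 d2) = 2%N ->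
  #|[set L in Lc | through_inf L d1]| = 2%N /\
  #|[set L in Lc | through_inf L d2]| = 2%N /\
  (\rank (span_lines ([set L in Lc | through_inf L d1] :|:
                      [set L in Lc | through_inf L d2])) <= 4)%N.
Proof.
move=> n4 [alines [w hw]] par d1 d2 d10 d20 _.
set W := \sum_(P in [set: 'rV[F]_n]) w P.
pose T d := [set L in Lc | through_inf L d].
have TW : forall d, d != 0 -> #|T d|%:R = W.
  move=> d d0; rewrite /W (sum_dir hw d [set: _] d0); last by move=> *; rewrite inE.
  by congr (_%:R); apply: eq_card => L; rewrite !inE subsetT andbT.
have T0 : T 0 = set0.
  apply/setP => L; rewrite !inE; case: (boolP (L \in Lc)) => //= /alines.
  by move/aline_ne0/negbTE.
have dc : (\sum_(L in Lc) #|[set d | through_inf L d]| = \sum_d #|T d|)%N.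
  transitivity (\sum_(L in Lc) \sum_d (through_inf L d : nat))%N.
    apply: eq_bigr => L _; rewrite -sum1_card big_mkcond /=.
    by apply: eq_bigr => d _; rewrite inE; case: through_inf.
  rewrite exchange_big; apply: eq_bigr => d _.
  rewrite -sum1_card big_mkcond [RHS]big_mkcond /=; apply: eq_bigr => L _.
  by rewrite !inE; case: (L \in Lc); case: through_inf.
have lhs : (\sum_(L in Lc) #|[set d | through_inf L d]| = #|Lc| * #|F|.-1)%N.
  rewrite -sum_nat_const; apply: eq_bigr => L.
  by move/alines/existsP => [a /existsP[e /andP[e0 /eqP ->]]]; exact: card_dirs.
have rhs : (\sum_d #|T d|)%:R = W *+ #|'rV[F]_n|.-1 :> R.
  rewrite natr_sum (bigD1 0) //= T0 cards0 add0r.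
  rewrite (eq_bigr (fun _ => W)); last by move=> d; apply: TW.
  by rewrite sumr_const cardC1.
have q1 : (1 < #|F|)%N.
  by apply/card_gt1P; exists 0, 1; rewrite !inE eq_sym oner_neq0.
have qn : (1 < #|F| ^ n)%N.
  by rewrite -[1%N](expn0 #|F|) ltn_exp2l //; apply: leq_trans n4.
have e1 : (#|F|%:R - 1 : R) = (#|F|.-1)%:R by rewrite -subn1 natrB // ltnW.
have e2 : ((#|F| ^ n)%:R - 1 : R) = ((#|F| ^ n).-1)%:R by rewrite -subn1 natrB // ltnW.
have eq1 : #|Lc|%:R * (#|F|%:R - 1) = W * ((#|F| ^ n)%:R - 1) :> R.
  by rewrite e1 e2 -natrM -lhs dc rhs card_mx mul1n mulr_natr.


have D0 : (#|F| ^ n)%:R - 1 != 0 :> R.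
  by rewrite e2 pnatr_eq0 -lt0n -subn1 subn_gt0.
have W2 : W = 2.
  move: par; rewrite /CL_param eq1 -natrX => <-.
  by rewrite mulfK.
have Tc : forall d, d != 0 -> #|T d| = 2%N.
  by move=> d d0; apply/eqP; rewrite -(eqr_nat R) TW // W2.
split; first exact: Tc.
split; first exact: Tc.
move/eqP: (Tc d1 d10) => /cards2P [L1 [L1' [_ T1E]]].
have : L1 \in T d1 by rewrite T1E !inE eqxx.
rewrite inE => /andP[_ /existsP[a1 /eqP E1]].
have : L1' \in T d1 by rewrite T1E !inE eqxx orbT.
rewrite inE => /andP[_ /existsP[a1' /eqP E1']].
set r1 : 'rV[F]_(n + 1) := row_mx d1 0.
set r2 : 'rV[F]_(n + 1) := row_mx d2 0.
pose M := col_mx (col_mx (Defs.hom a1) (Defs.hom a1')) (col_mx r1 r2).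
have s1 : (r1 <= M)%MS by apply: submx_trans (col_subl _ _) (col_subr _ _).
have s2 : (r2 <= M)%MS by apply: submx_trans (col_subr _ _) (col_subr _ _).
have sa1 : (Defs.hom a1 <= M)%MS by apply: submx_trans (col_subl _ _) (col_subl _ _).
have sa1' : (Defs.hom a1' <= M)%MS by apply: submx_trans (col_subr _ _) (col_subl _ _).
have inT1 : forall L P, L \in T d1 -> P \in L -> (Defs.hom P <= M)%MS.
  move=> L P; rewrite -/(T d1) T1E !inE => /orP[] /eqP -> ;
    rewrite ?E1 ?E1' => /imsetP[t _ ->].
  - by rewrite -[_ + _](addr0) -(scale0r d2); apply: hom_sub.
  - by rewrite -[_ + _](addr0) -(scale0r d2); apply: hom_sub.
apply: leq_trans (mxrankS _) (rank_leq_row M).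
apply/sumsmx_subP => L; rewrite inE => /orP[] HL; apply/sumsmx_subP => P PL;
  rewrite genmxE; first exact: inT1 HL PL.
move: HL; rewrite inE => /andP[LLc /existsP[a2 /eqP E2]].
pose tau := [set a2 + s *: d1 + t *: d2 | s : F, t : F].
have cl1 : forall P u, P \in tau -> P + u *: d1 \in tau.
  move=> Q u /imset2P[s t _ _ ->]; apply/imset2P; exists (s + u) t => //.
  by rewrite scalerDl addrA [RHS]addrAC.
have cl2 : forall P u, P \in tau -> P + u *: d2 \in tau.
  move=> Q u /imset2P[s t _ _ ->]; apply/imset2P; exists s (t + u) => //.
  by rewrite scalerDl addrA.
have ceq := eq_trans (esym (sum_dir hw d1 tau d10 cl1)) (sum_dir hw d2 tau d20 cl2).
move/eqP: ceq; rewrite eqr_nat => /eqP ceq.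
have : (0 < #|[set L in Lc | through_inf L d1 & L \subset tau]|)%N.
  rewrite ceq card_gt0; apply/set0Pn; exists L; rewrite !inE LLc /=.
  apply/andP; split; first by apply/existsP; exists a2; rewrite E2.
  rewrite E2; apply/subsetP => x /imsetP[t _ ->]; apply/imset2P.
  by exists 0 t => //; rewrite scale0r addr0.
rewrite card_gt0 => /set0Pn[L' ]; rewrite !inE => /andP[L'Lc /andP[thr sub]].
have L'T : L' \in T d1 by rewrite inE L'Lc thr.
case/existsP: thr => ai /eqP Ei.
have hai : (Defs.hom ai <= M)%MS by apply: (inT1 L' ai L'T); rewrite Ei mem_line.
have : ai \in tau by apply: (subsetP sub); rewrite Ei mem_line.
case/imset2P => s0 t0 _ _ Hai.
have ha2 : (Defs.hom a2 <= M)%MS.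
  have -> : a2 = ai + (- s0) *: d1 + (- t0) *: d2.
    by rewrite Hai !scaleNr addrAC addrK addrK.
  exact: hom_sub.
move: PL; rewrite E2 => /imsetP[t _ ->].
by rewrite -[a2](addr0) -(scale0r d1); apply: hom_sub.
Qed.
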